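(* For every $n\ge1$ and $\epsilon>0$ there is a quantum algorithm that $\epsilon$-tests the Pauli group $\mathcal{P}_n$ using $O(1/\epsilon^2)$ queries to $U$, with implied constant independent of $n$ and $\epsilon$.
   Context: $n\ge1$, $N=2^n$. Pauli matrices $\sigma_0=I,\sigma_1=X,\sigma_2=Y,\sigma_3=Z$; for $\vec{x}\in\mathbb{Z}_4^n$, $\sigma_{\vec{x}}=\sigma_{x_1}\otimes\cdots\otimes\sigma_{x_n}$. $\mathcal{P}_n=\{i^k\sigma_{\vec{x}}: k\in\{0,1,2,3\},\vec{x}\in\mathbb{Z}_4^n\}$. $\|A\|=\sqrt{\mathrm{tr}(A^\dagger A)}$; $D(A,B)=\min_{\theta\in[0,2\pi)}\frac{1}{\sqrt{2N}}\|e^{i\theta}A-B\|$; $D(A,\mathcal{S})=\inf_{B\in\mathcal{S}}D(A,B)$. For $\mathcal{S}\subseteq\mathbb{U}_N$ (the $N\times N$ unitaries), $U$ has property $\mathcal{S}$ if $U=e^{i\theta}V$ for some $V\in\mathcal{S}$, real $\theta$; $U$ is $\epsilon$-far from $\mathcal{S}$ if $D(U,V)\ge\epsilon$ for all $V\in\mathcal{S}$. Testing model: the unknown $U\in\mathbb{U}_N$ is a black box; the algorithm may prepare arbitrary states on the system plus an ancilla, apply $U\otimes I$ (one query each), interleaved with arbitrary fixed quantum operations, and measure. It $\epsilon$-tests $\mathcal{S}$ if for every $U\in\mathbb{U}_N$ it accepts with probability $\ge2/3$ when $U$ has property $\mathcal{S}$ and with probability $\le1/3$ when $U$ is $\epsilon$-far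 from $\mathcal{S}$. *)

(* Defs.v *)
(* complex numbers are built by hand as pairs of Stdlib reals,
   matrices as functions nat -> nat -> C read on an explicit index range. *)
From Stdlib Require Import Reals Lra Lia List.
Open Scope R_scope.

Definition C : Type := (R * R)%type.
Definition RtoC (r : R) : C := (r, 0).
Definition C0 : C := (0, 0).
Definition C1 : C := (1, 0).
Definition Ci : C := (0, 1).
Definition Cadd (z w : C) : C := (fst z + fst w, snd z + snd w).
Definition Copp (z : C) : C := (- fst z, - snd z).
Definition Csub (z w : C) : C := Cadd z (Copp w).
Definition Cmul (z w : C) : C :=
  (fst z * fst w - snd z * snd w, fst z * snd w + snd z * fst w).
Definition Cconj (z : C) : C := (fst z, - snd z).
Definition Cmod2 (z : C) : R := fst z * fst z + snd z * snd z.
Definition Cexpi (theta : R) : C := (cos theta, sin theta).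
Fixpoint Cpow (z : C) (k : nat) : C :=
  match k with O => C1 | S k' => Cmul z (Cpow z k') end.

Fixpoint Csum (n : nat) (f : nat -> C) : C :=
  match n with O => C0 | S n' => Cadd (Csum n' f) (f n') end.
Fixpoint Rsum (n : nat) (f : nat -> R) : R :=
  match n with O => 0 | S n' => Rsum n' f + f n' end.

Definition Vec : Type := nat -> C.
Definition Mat : Type := nat -> nat -> C.

Definition Mid : Mat := fun i j => if Nat.eqb i j then C1 else C0.
Definition Mscale (z : C) (A : Mat) : Mat := fun i j => Cmul z (A i j).
Definition Msub (A B : Mat) : Mat := fun i j => Csub (A i j) (B i j).
Definition Madj (A : Mat) : Mat := fun i j => Cconj (A j i).
Definition Mmul (d : nat) (A B : Mat) : Mat :=
  fun i j => Csum d (fun k => Cmul (A i k) (B k j)).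
Definition Mapply (d : nat) (A : Mat) (v : Vec) : Vec :=
  fun i => Csum d (fun k => Cmul (A i k) (v k)).
Definition kron (dB : nat) (A B : Mat) : Mat :=
  fun i j => Cmul (A (i / dB)%nat (j / dB)%nat) (B (i mod dB)%nat (j mod dB)%nat).

Definition unitary (d : nat) (U : Mat) : Prop :=
  forall i j, (i < d)%nat -> (j < d)%nat -> Mmul d (Madj U) U i j = Mid i j.

Definition frob (d : nat) (A : Mat) : R :=
  sqrt (Rsum d (fun i => Rsum d (fun j => Cmod2 (A i j)))).

Definition vnorm2 (d : nat) (v : Vec) : R := Rsum d (fun i => Cmod2 (v i)).

Definition Meq (d : nat) (A B : Mat) : Prop :=
  forall i j, (i < d)%nat -> (j < d)%nat -> A i j = B i j.

Definition sigma (a : nat) : Mat :=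
  fun i j =>
    match a with
    | 0%nat => if Nat.eqb i j then C1 else C0
    | 1%nat => if Nat.eqb i j then C0 else C1
    | 2%nat => if Nat.eqb i j then C0
               else if Nat.eqb i 0 then Copp Ci else Ci
    | _ => if Nat.eqb i j then (if Nat.eqb i 0 then C1 else Copp C1)
           else C0
    end.

Fixpoint pauli_tensor (x : list nat) : Mat :=
  match x with
  | nil => Mid
  | a :: l => kron (2 ^ length l) (sigma a) (pauli_tensor l)
  end.

Definition z4vec (n : nat) (x : list nat) : Prop :=
  length x = n /\ Forall (fun a => (a < 4)%nat) x.

Definition in_pauli_group (n : nat) (P : Mat) : Prop :=
  exists k x, (k < 4)%nat /\ z4vec n x /\ Meq (2 ^ n) P (Mscale (Cpow Ci k) (pauli_tensor x)).

Definition has_pauli_property (n : nat) (U : Mat) : Prop :=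
  exists theta V, in_pauli_group n V /\ Meq (2 ^ n) U (Mscale (Cexpi theta) V).

(* D(A,B) >= eps, with D(A,B) = min_theta (1/sqrt(2N)) ||e^{i theta} A - B||, N = 2^n *)
Definition dist_ge (n : nat) (A B : Mat) (eps : R) : Prop :=
  forall theta : R,
    eps <= / sqrt (2 * INR (2 ^ n)) * frob (2 ^ n) (Msub (Mscale (Cexpi theta) A) B).

Definition eps_far_pauli (n : nat) (eps : R) (U : Mat) : Prop :=
  forall V, in_pauli_group n V -> dist_ge n U V eps.

(* ---------- query algorithms ----------
   Register = system (dimension N = 2^n, most significant) (x) ancilla (dimension anc).
   The algorithm prepares psi0, applies V_0, then alternates (U (x) I) and V_k
   (k = 1..q), and finally measures in the computational basis, accepting on
   the basis states i with acc i = true. *)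
Record algorithm : Type := mkAlg {
  anc : nat;
  queries : nat;
  psi0 : Vec;
  ops : nat -> Mat;
  acc : nat -> bool
}.

Definition reg_dim (n : nat) (a : algorithm) : nat := (2 ^ n * anc a)%nat.

Definition well_formed (n : nat) (a : algorithm) : Prop :=
  (1 <= anc a)%nat /\
  vnorm2 (reg_dim n a) (psi0 a) = 1 /\
  (forall k, (k <= queries a)%nat -> unitary (reg_dim n a) (ops a k)).

Fixpoint state_after (n : nat) (a : algorithm) (U : Mat) (k : nat) : Vec :=
  let M := reg_dim n a in
  match k with
  | O => Mapply M (ops a 0) (psi0 a)
  | S k' => Mapply M (ops a k)
              (Mapply M (kron (anc a) U Mid) (state_after n a U k'))
  end.

Definition accept_prob (n : nat) (a : algorithm) (U : Mat) : R :=
  let fin := state_after n a U (queries a) in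
  Rsum (reg_dim n a) (fun i => if acc a i then Cmod2 (fin i) else 0).

Definition eps_tests_pauli (n : nat) (eps : R) (a : algorithm) : Prop :=
  forall U, unitary (2 ^ n) U ->
    (has_pauli_property n U -> 2 / 3 <= accept_prob n a U) /\
    (eps_far_pauli n eps U -> accept_prob n a U <= 1 / 3).

(* Main.v *)
Require Import Defs.
From Stdlib Require Import Reals Lra Lia List ZArith.
Open Scope R_scope.
Require Import Defs.

Ltac cdestr := repeat match goal with z : Defs.C |- _ => destruct z end.
Ltac cring := unfold Cadd, Cmul, Copp, Csub, Cconj, C0, C1, Ci, RtoC, Cmod2 in *; apply injective_projections; simpl; ring.
Section S_A.


Lemma Cadd_comm z w : Cadd z w = Cadd w z. Proof. cring. Qed.
Lemma Cadd_assoc z w u : Cadd z (Cadd w u) = Cadd (Cadd z w) u. Proof. cring. Qed.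
Lemma Cadd_0_l z : Cadd C0 z = z. Proof. cring. Qed.
Lemma Cadd_0_r z : Cadd z C0 = z. Proof. cring. Qed.
Lemma Cmul_comm z w : Cmul z w = Cmul w z. Proof. cring. Qed.
Lemma Cmul_assoc z w u : Cmul z (Cmul w u) = Cmul (Cmul z w) u. Proof. cring. Qed.
Lemma Cmul_1_l z : Cmul C1 z = z. Proof. cring. Qed.
Lemma Cmul_1_r z : Cmul z C1 = z. Proof. cring. Qed.
Lemma Cmul_0_l z : Cmul C0 z = C0. Proof. cring. Qed.
Lemma Cmul_0_r z : Cmul z C0 = C0. Proof. cring. Qed.
Lemma Cmul_add_l z w u : Cmul (Cadd z w) u = Cadd (Cmul z u) (Cmul w u). Proof. cring. Qed.
Lemma Cmul_add_r z w u : Cmul u (Cadd z w) = Cadd (Cmul u z) (Cmul u w). Proof. cring. Qed.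
Lemma Cconj_add z w : Cconj (Cadd z w) = Cadd (Cconj z) (Cconj w). Proof. cring. Qed.
Lemma Cconj_mul z w : Cconj (Cmul z w) = Cmul (Cconj z) (Cconj w). Proof. cring. Qed.
Lemma Cconj_0 : Cconj C0 = C0. Proof. cring. Qed.
Lemma Cconj_1 : Cconj C1 = C1. Proof. cring. Qed.
Lemma Cconj_involutive z : Cconj (Cconj z) = z. Proof. cring. Qed.
Lemma Cmod2_mul z w : Cmod2 (Cmul z w) = Cmod2 z * Cmod2 w. Proof. cdestr; unfold Cmod2, Cmul; simpl; ring. Qed.
Lemma Cmod2_ge0 z : 0 <= Cmod2 z. Proof. destruct z; unfold Cmod2; simpl; nra. Qed.
Lemma Cmod2_conj z : Cmod2 z = fst (Cmul (Cconj z) z). Proof. destruct z; unfold Cmod2, Cmul, Cconj; simpl; ring. Qed.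

Lemma Csum_ext n f g : (forall i, (i < n)%nat -> f i = g i) -> Csum n f = Csum n g.
Proof. induction n; simpl; intros H; auto. rewrite IHn by (intros; apply H; lia). rewrite H by lia; auto. Qed.
Lemma Csum_add n f g : Csum n (fun i => Cadd (f i) (g i)) = Cadd (Csum n f) (Csum n g).
Proof. induction n; simpl. cring. rewrite IHn. cring. Qed.
Lemma Csum_scal n c f : Csum n (fun i => Cmul c (f i)) = Cmul c (Csum n f).
Proof. induction n; simpl. cring. rewrite IHn. cring. Qed.
Lemma Csum_scal_r n c f : Csum n (fun i => Cmul (f i) c) = Cmul (Csum n f) c.
Proof. induction n; simpl. cring. rewrite IHn. cring. Qed.
Lemma Csum_conj n f : Cconj (Csum n f) = Csum n (fun i => Cconj (f i)).
Proof. induction n; simpl. cring. rewrite Cconj_add, IHn; auto. Qed.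
Lemma Csum_zero n f : (forall i, (i < n)%nat -> f i = C0) -> Csum n f = C0.
Proof. induction n; simpl; intros H; auto. rewrite IHn, H by (intros; try apply H; lia). cring. Qed.
Lemma Csum_swap n m f : Csum n (fun i => Csum m (fun j => f i j)) = Csum m (fun j => Csum n (fun i => f i j)).
Proof. induction n; simpl. rewrite Csum_zero; auto. rewrite IHn, <- Csum_add; auto. Qed.
Lemma Csum_plus m b f : Csum (m + b) f = Cadd (Csum m f) (Csum b (fun j => f (m + j)%nat)).
Proof. induction b; simpl. rewrite Nat.add_0_r, Cadd_0_r; auto. rewrite Nat.add_succ_r; simpl. rewrite IHb, Cadd_assoc; auto. Qed.
Lemma Csum_split a b f : Csum (a * b) f = Csum a (fun i => Csum b (fun j => f (i * b + j)%nat)).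
Proof. induction a; simpl; auto. rewrite Nat.add_comm, Csum_plus, IHa. f_equal. Qed.
Lemma Csum_delta n m f : (m < n)%nat -> Csum n (fun i => Cmul (Mid i m) (f i)) = f m.
Proof. induction n; intros H; simpl. lia. unfold Mid at 2. destruct (Nat.eqb_spec n m).
 - subst. rewrite Csum_zero. cring. intros i Hi. unfold Mid. destruct (Nat.eqb_spec i m); [lia|cring].
 - rewrite IHn by lia. cring. Qed.
Lemma Csum_delta' n m f : (m < n)%nat -> Csum n (fun i => Cmul (Mid m i) (f i)) = f m.
Proof. intros H. rewrite <- (Csum_delta n m f H). apply Csum_ext. intros i _. unfold Mid.
 rewrite Nat.eqb_sym; auto. Qed.
Lemma Csum_mul_Csum n m f g : Cmul (Csum n f) (Csum m g) = Csum n (fun i => Csum m (fun j => Cmul (f i) (g j))).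
Proof. rewrite <- Csum_scal_r. apply Csum_ext. intros. rewrite <- Csum_scal. auto. Qed.

Lemma Rsum_ext n f g : (forall i, (i < n)%nat -> f i = g i) -> Rsum n f = Rsum n g.
Proof. induction n; simpl; intros H; auto. rewrite IHn by (intros; apply H; lia). rewrite H by lia; auto. Qed.
Lemma Rsum_fst n f : Rsum n (fun i => fst (f i)) = fst (Csum n f).
Proof. induction n; simpl; auto. rewrite IHn; auto. Qed.
Lemma Rsum_plus m b f : Rsum (m + b) f = Rsum m f + Rsum b (fun j => f (m + j)%nat).
Proof. induction b; simpl. rewrite Nat.add_0_r; ring. rewrite Nat.add_succ_r; simpl. rewrite IHb. ring. Qed.
Lemma Rsum_split a b f : Rsum (a * b) f = Rsum a (fun i => Rsum b (fun j => f (i * b + j)%nat)).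
Proof. induction a; simpl; auto. rewrite Nat.add_comm, Rsum_plus, IHa. ring. Qed.
Lemma Rsum_scal n c f : Rsum n (fun i => c * f i) = c * Rsum n f.
Proof. induction n; simpl. ring. rewrite IHn. ring. Qed.
Lemma Rsum_le n f g : (forall i, (i < n)%nat -> f i <= g i) -> Rsum n f <= Rsum n g.
Proof. induction n; simpl; intros H. lra. apply Rplus_le_compat; [apply IHn; intros; apply H; lia| apply H; lia]. Qed.
Lemma Rsum_nonneg n f : (forall i, (i < n)%nat -> 0 <= f i) -> 0 <= Rsum n f.
Proof. intros H. replace 0 with (Rsum n (fun _ => 0)). apply Rsum_le; auto. induction n; simpl; auto. rewrite IHn; [ring|intros; apply H; lia]. Qed.
Lemma Rsum_ge_term n f m : (m < n)%nat -> (forall i, (i < n)%nat -> 0 <= f i) -> f m <= Rsum n f.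
Proof. induction n; intros Hm H; simpl. lia. destruct (Nat.eq_dec m n). subst.
 assert (0 <= Rsum n f) by (apply Rsum_nonneg; intros; apply H; lia). lra.
 assert (f m <= Rsum n f) by (apply IHn; [lia| intros; apply H; lia]). assert (0 <= f n) by (apply H; lia). lra. Qed.
Lemma Rsum_const0 n : Rsum n (fun _ => 0) = 0.
Proof. induction n; simpl; auto. rewrite IHn; ring. Qed.

End S_A.
Section S_B.
Local Open Scope nat_scope.

Lemma dm_div a B b : (b < B)%nat -> ((a * B + b) / B = a)%nat.
Proof. intros. symmetry. apply (Nat.div_unique _ _ _ b); lia. Qed.
Lemma dm_mod a B b : (b < B)%nat -> ((a * B + b) mod B = b)%nat.
Proof. intros. symmetry. apply (Nat.mod_unique _ _ a); lia. Qed.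

Lemma Mid_divmod B i j : (0 < B)%nat -> Cmul (Mid (i / B) (j / B)) (Mid (i mod B) (j mod B)) = Mid i j.
Proof. intros HB. unfold Mid.
 destruct (Nat.eqb_spec i j).
 - subst. rewrite !Nat.eqb_refl. cring.
 - destruct (Nat.eqb_spec (i/B) (j/B)); destruct (Nat.eqb_spec (i mod B) (j mod B)); try cring.
   exfalso. apply n. rewrite (Nat.div_mod_eq i B), (Nat.div_mod_eq j B). lia. Qed.

Lemma Cconj_Mid i j : Cconj (Mid i j) = Mid i j.
Proof. unfold Mid; destruct (i =? j)%nat; cring. Qed.
Lemma Mid_sym i j : Mid i j = Mid j i.
Proof. unfold Mid. rewrite Nat.eqb_sym. auto. Qed.

Lemma unit_col d A k l : unitary d A -> k < d -> l < d ->
  Csum d (fun m => Cmul (Cconj (A m k)) (A m l)) = Mid k l.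
Proof. intros H Hk Hl. apply (H k l Hk Hl). Qed.

Lemma Mapply_ext d A v w i : (forall k, (k < d)%nat -> v k = w k) -> Mapply d A v i = Mapply d A w i.
Proof. intros H. unfold Mapply. apply Csum_ext. intros. rewrite H; auto. Qed.

Lemma Mapply_Mmul d A B v i : Mapply d (Mmul d A B) v i = Mapply d A (Mapply d B v) i.
Proof. unfold Mapply, Mmul.
 transitivity (Csum d (fun k => Csum d (fun m => Cmul (A i m) (Cmul (B m k) (v k))))).
 - apply Csum_ext; intros. rewrite <- Csum_scal_r. apply Csum_ext; intros. symmetry; apply Cmul_assoc.
 - rewrite Csum_swap. apply Csum_ext; intros. rewrite <- Csum_scal. auto. Qed.

Lemma unitary_Mmul d A B : unitary d A -> unitary d B -> unitary d (Mmul d A B).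
Proof. intros HA HB i j Hi Hj. unfold Mmul, Madj.
 transitivity (Csum d (fun m => Csum d (fun l => Cmul (Cmul (Cconj (B m i)) (B l j)) (Mmul d (Madj A) A m l)))).
 - unfold Mmul, Madj. 
   transitivity (Csum d (fun k => Csum d (fun m => Csum d (fun l =>
        Cmul (Cmul (Cconj (B m i)) (B l j)) (Cmul (Cconj (A k m)) (A k l)))))).
   + apply Csum_ext; intros k Hk. rewrite Csum_conj, Csum_mul_Csum. apply Csum_ext; intros. apply Csum_ext; intros.
     rewrite Cconj_mul. cring.
   + rewrite Csum_swap. apply Csum_ext; intros. rewrite Csum_swap. apply Csum_ext; intros.
     rewrite Csum_scal. auto.
 - transitivity (Csum d (fun m => Cmul (Cconj (B m i)) (B m j))).
   + apply Csum_ext; intros m Hm. 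
     transitivity (Csum d (fun l => Cmul (Mid l m) (Cmul (Cconj (B m i)) (B l j)))).
     * apply Csum_ext; intros l Hl. rewrite HA by auto. rewrite Mid_sym. apply Cmul_comm.
     * rewrite Csum_delta by auto. auto.
   + apply HB; auto. Qed.

Lemma kron_entry B A a b j : (b < B)%nat -> kron B A Mid (a * B + b)%nat j = Cmul (A a (j / B)) (Mid b (j mod B)).
Proof. intros. unfold kron. rewrite dm_div, dm_mod; auto. Qed.

Lemma unitary_kron dA B A : (0 < B)%nat -> unitary dA A -> unitary (dA * B) (kron B A Mid).
Proof. intros HB HA i j Hi Hj. unfold Mmul, Madj. rewrite Csum_split.
 transitivity (Csum dA (fun a => Cmul (Cmul (Cconj (A a (i / B))) (A a (j / B))) (Mid (i mod B) (j mod B)))).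
 - apply Csum_ext; intros a Ha.
   transitivity (Csum B (fun b => Cmul (Mid b (i mod B)) (Cmul (Cmul (Cconj (A a (i / B))) (A a (j / B))) (Mid b (j mod B))))).
   + apply Csum_ext; intros b Hb. rewrite !kron_entry by auto. rewrite Cconj_mul, Cconj_Mid. cring.
   + rewrite Csum_delta by (apply Nat.mod_upper_bound; lia). auto.
 - rewrite Csum_scal_r. fold (Mmul dA (Madj A) A (i/B) (j/B)).
   change (Cmul (Mmul dA (Madj A) A (i/B) (j/B)) (Mid (i mod B) (j mod B)) = Mid i j). rewrite HA. apply Mid_divmod; auto.
   apply Nat.Div0.div_lt_upper_bound; lia. apply Nat.Div0.div_lt_upper_bound; lia. Qed.

Lemma norm_preserve d A v : unitary d A -> vnorm2 d (Mapply d A v) = vnorm2 d v.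
Proof. intros HA. unfold vnorm2.
 rewrite (Rsum_ext d (fun i => Cmod2 (Mapply d A v i)) (fun i => fst (Cmul (Cconj (Mapply d A v i)) (Mapply d A v i)))) by (intros; apply Cmod2_conj).
 rewrite (Rsum_ext d (fun i => Cmod2 (v i)) (fun i => fst (Cmul (Cconj (v i)) (v i)))) by (intros; apply Cmod2_conj).
 rewrite !Rsum_fst. f_equal. unfold Mapply.
 transitivity (Csum d (fun i => Csum d (fun k => Csum d (fun l => Cmul (Cmul (Cconj (v k)) (v l)) (Cmul (Cconj (A i k)) (A i l)))))).
 - apply Csum_ext; intros. rewrite Csum_conj, Csum_mul_Csum. apply Csum_ext; intros. apply Csum_ext; intros.
   rewrite Cconj_mul. cring.
 - rewrite Csum_swap. apply Csum_ext; intros k Hk. rewrite Csum_swap.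
   transitivity (Csum d (fun l => Cmul (Mid l k) (Cmul (Cconj (v k)) (v l)))).
   + apply Csum_ext; intros l Hl. rewrite Csum_scal. rewrite unit_col, Mid_sym by auto. apply Cmul_comm.
   + rewrite Csum_delta; auto. Qed.

Lemma Mapply_kron_prod dA B A v g h i : (0 < B)%nat ->
  (forall j, (j < dA * B)%nat -> v j = Cmul (g (j / B)%nat) (h (j mod B)%nat)) ->
  Mapply (dA * B) (kron B A Mid) v i = Cmul (Mapply dA A g (i / B)) (h (i mod B)).
Proof. intros HB Hv. unfold Mapply. rewrite Csum_split. rewrite <- Csum_scal_r.
 apply Csum_ext; intros a Ha.
 transitivity (Csum B (fun b => Cmul (Mid (i mod B) b) (Cmul (Cmul (A (i / B) a) (g a)) (h b)))).
 - apply Csum_ext; intros b Hb. rewrite Hv by nia. unfold kron. rewrite !dm_div, !dm_mod by auto. cring.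
 - rewrite Csum_delta' by (apply Nat.mod_upper_bound; lia). auto. Qed.

End S_B.
Section S_Cp.

Fixpoint digits (n x : nat) : list nat :=
  match n with O => nil | S m => (x / 4 ^ m)%nat :: digits m (x mod 4 ^ m) end.
Definition P (n x : nat) : Mat := pauli_tensor (digits n x).
Fixpoint idx (l : list nat) : nat :=
  match l with nil => O | a :: l' => (a * 4 ^ length l' + idx l')%nat end.

Lemma digits_length n x : length (digits n x) = n.
Proof. revert x; induction n; simpl; auto. Qed.

Lemma pow_pos a n : (0 < a)%nat -> (0 < a ^ n)%nat.
Proof. intros. apply Nat.neq_0_lt_0. apply Nat.pow_nonzero. lia. Qed.

Lemma digits_z4 n x : (x < 4 ^ n)%nat -> z4vec n (digits n x).
Proof. revert x; induction n; intros x Hx; split; simpl; auto.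
 - rewrite digits_length; auto.
 - constructor. apply Nat.Div0.div_lt_upper_bound. simpl in Hx. lia.
   apply IHn. apply Nat.mod_upper_bound. pose proof (pow_pos 4 n). lia. Qed.

Lemma idx_lt l : Forall (fun a => (a < 4)%nat) l -> (idx l < 4 ^ length l)%nat.
Proof. induction l; simpl; intros H. lia. inversion H; subst. specialize (IHl H3). nia. Qed.

Lemma digits_idx l : Forall (fun a => (a < 4)%nat) l -> digits (length l) (idx l) = l.
Proof. induction l; simpl; intros H; auto. inversion H; subst. specialize (IHl H3).
 pose proof (idx_lt l H3). rewrite dm_div, dm_mod by auto. rewrite IHl; auto. Qed.

Lemma P_S n x i j : P (S n) x i j =
  Cmul (sigma (x / 4 ^ n)%nat (i / 2 ^ n)%nat (j / 2 ^ n)%nat) (P n (x mod 4 ^ n)%nat (i mod 2 ^ n)%nat (j mod 2 ^ n)%nat).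
Proof. unfold P. simpl. unfold kron. rewrite digits_length. auto. Qed.

Lemma qubit_complete i j k l : (i < 2)%nat -> (j < 2)%nat -> (k < 2)%nat -> (l < 2)%nat ->
  Csum 4 (fun a => Cmul (Cconj (sigma a i j)) (sigma a k l)) = Cmul (RtoC 2) (Cmul (Mid i k) (Mid j l)).
Proof. intros. destruct i as [|[|]]; try lia; destruct j as [|[|]]; try lia;
 destruct k as [|[|]]; try lia; destruct l as [|[|]]; try lia; simpl; unfold Mid; simpl; cring. Qed.

Lemma pauli_complete n i j k l : (i < 2 ^ n)%nat -> (j < 2 ^ n)%nat -> (k < 2 ^ n)%nat -> (l < 2 ^ n)%nat ->
  Csum (4 ^ n) (fun x => Cmul (Cconj (P n x i j)) (P n x k l)) = Cmul (RtoC (INR (2 ^ n))) (Cmul (Mid i k) (Mid j l)).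
Proof. revert i j k l; induction n; intros i j k l Hi Hj Hk Hl.
 - simpl in *. assert (i = 0)%nat by lia. assert (j = 0)%nat by lia. assert (k = 0)%nat by lia. assert (l = 0)%nat by lia.
   subst. unfold P; simpl. unfold Mid; simpl. cring.
 - pose proof (pow_pos 2 n) as H2. pose proof (pow_pos 4 n) as H4.
   change (4 ^ S n)%nat with (4 * 4 ^ n)%nat. rewrite Csum_split.
   transitivity (Csum 4 (fun a => Csum (4 ^ n) (fun y =>
      Cmul (Cmul (Cconj (sigma a (i / 2 ^ n)%nat (j / 2 ^ n)%nat)) (sigma a (k / 2 ^ n)%nat (l / 2 ^ n)%nat))
           (Cmul (Cconj (P n y (i mod 2 ^ n)%nat (j mod 2 ^ n)%nat)) (P n y (k mod 2 ^ n)%nat (l mod 2 ^ n)%nat))))).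
   + apply Csum_ext; intros a Ha. apply Csum_ext; intros y Hy. rewrite !P_S. rewrite dm_div, dm_mod by auto.
     rewrite Cconj_mul. cring.
   + rewrite <- Csum_mul_Csum. simpl in Hi, Hj, Hk, Hl.
     rewrite qubit_complete by (apply Nat.Div0.div_lt_upper_bound; lia).
     rewrite IHn by (apply Nat.mod_upper_bound; lia).
     rewrite <- (Mid_divmod (2 ^ n) i k), <- (Mid_divmod (2 ^ n) j l) by auto.
     change (2 ^ S n)%nat with (2 * 2 ^ n)%nat. rewrite mult_INR. simpl (INR 2).
     unfold RtoC. cring. Qed.

Lemma Rsum_const1 n : Rsum n (fun _ => 1) = INR n.
Proof. induction n; simpl; auto. rewrite IHn. destruct n; simpl; ring. Qed.

Lemma Rsum_mul_Rsum n m f g : Rsum n f * Rsum m g = Rsum n (fun i => Rsum m (fun j => f i * g j)).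
Proof. induction n; simpl. ring. rewrite <- IHn. rewrite Rmult_plus_distr_r. f_equal.
 rewrite <- Rsum_scal. auto. Qed.

Lemma P_row n x i : (i < 2 ^ n)%nat -> Rsum (2 ^ n) (fun j => Cmod2 (P n x i j)) = 1.
Proof. revert x i; induction n; intros x i Hi.
 - simpl in *. assert (i = 0)%nat by lia. subst. unfold P, Mid; simpl. unfold Cmod2, C1; simpl; ring.
 - pose proof (pow_pos 2 n) as H2.
   change (2 ^ S n)%nat with (2 * 2 ^ n)%nat. rewrite Rsum_split.
   transitivity (Rsum 2 (fun c => Cmod2 (sigma (x / 4 ^ n)%nat (i / 2 ^ n)%nat c)) *
                 Rsum (2 ^ n) (fun d => Cmod2 (P n (x mod 4 ^ n)%nat (i mod 2 ^ n)%nat d))).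
   + rewrite Rsum_mul_Rsum. apply Rsum_ext; intros. apply Rsum_ext; intros.
     rewrite P_S, Cmod2_mul, dm_div, dm_mod; auto.
   + rewrite IHn by (apply Nat.mod_upper_bound; lia).
     assert (i / 2 ^ n < 2)%nat by (apply Nat.Div0.div_lt_upper_bound; simpl in Hi; lia).
     destruct (i / 2 ^ n)%nat as [|[|]]; try lia;
     destruct (x / 4 ^ n)%nat as [|[|[|]]]; simpl; unfold Cmod2, C1, C0, Ci, Copp; simpl; ring. Qed.

Lemma P_frob n x : Rsum (2 ^ n) (fun i => Rsum (2 ^ n) (fun j => Cmod2 (P n x i j))) = INR (2 ^ n).
Proof. rewrite <- Rsum_const1. apply Rsum_ext. intros. apply P_row; auto. Qed.

End S_Cp.
Section S_Dp.
Local Open Scope nat_scope.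

Fixpoint prodvec (D : nat) (fs : list Vec) : Vec :=
  match fs with
  | nil => fun _ => C1
  | f :: fs' => fun i => Cmul (f (i / D ^ length fs')) (prodvec D fs' (i mod D ^ length fs'))
  end.

Lemma mod_mul_div D L i : 0 < D -> (i mod (D * L)) / D = (i / D) mod L.
Proof. intros. rewrite Nat.Div0.mod_mul_r. rewrite Nat.mul_comm, Nat.add_comm. apply dm_div.
 apply Nat.mod_upper_bound; lia. Qed.
Lemma mod_mul_mod D L i : 0 < D -> (i mod (D * L)) mod D = i mod D.
Proof. intros. rewrite Nat.Div0.mod_mul_r. rewrite Nat.mul_comm, Nat.add_comm. apply dm_mod.
 apply Nat.mod_upper_bound; lia. Qed.

Lemma prodvec_app D fs f i : 0 < D -> i < D ^ S (length fs) ->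
  prodvec D (fs ++ f :: nil) i = Cmul (prodvec D fs (i / D)) (f (i mod D)).
Proof. intros HD. revert i. induction fs as [|g fs IH]; intros i Hi.
 - cbn [prodvec app length] in *. rewrite ?Nat.pow_0_r, ?Nat.div_1_r, ?Nat.mod_1_r. rewrite ?Nat.pow_1_r, ?Nat.pow_0_r, ?Nat.mul_1_r in Hi. rewrite (Nat.mod_small i D) by lia. cring.
 - cbn [prodvec app]. rewrite length_app. simpl length. simpl length in Hi.
   replace (length fs + 1) with (S (length fs)) by lia.
   rewrite IH. 2:{ apply Nat.mod_upper_bound. pose proof (pow_pos D (S (length fs)) HD). lia. }
   change (D ^ S (length fs)) with (D * D ^ length fs).
   rewrite mod_mul_div, mod_mul_mod, Nat.Div0.div_div by auto. rewrite <- Cmul_assoc. auto. Qed.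

Definition rot (D B i : nat) : nat := (i mod D) * B + i / D.
Definition rotinv (D B i : nat) : nat := (i mod B) * D + i / B.
Definition Rmat (D B : nat) : Mat := fun i j => Mid j (rot D B i).

Lemma rot_lt D B i : 0 < D -> i < D * B -> rot D B i < D * B.
Proof. intros. unfold rot. assert (i mod D < D) by (apply Nat.mod_upper_bound; lia).
 assert (i / D < B) by (apply Nat.Div0.div_lt_upper_bound; lia). nia. Qed.
Lemma rotinv_lt D B i : 0 < B -> i < D * B -> rotinv D B i < D * B.
Proof. intros. unfold rotinv. assert (i mod B < B) by (apply Nat.mod_upper_bound; lia).
 assert (i / B < D) by (apply Nat.Div0.div_lt_upper_bound; lia). nia. Qed.
Lemma rot_rotinv D B i : 0 < D -> 0 < B -> i < D * B -> rot D B (rotinv D B i) = i.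
Proof. intros. unfold rot, rotinv.
 assert (i mod B < B) by (apply Nat.mod_upper_bound; lia).
 assert (i / B < D) by (apply Nat.Div0.div_lt_upper_bound; lia).
 rewrite dm_mod, dm_div by auto. rewrite Nat.mul_comm. symmetry. apply Nat.div_mod_eq. Qed.
Lemma rotinv_rot D B i : 0 < D -> 0 < B -> i < D * B -> rotinv D B (rot D B i) = i.
Proof. intros. unfold rot, rotinv.
 assert (i mod D < D) by (apply Nat.mod_upper_bound; lia).
 assert (i / D < B) by (apply Nat.Div0.div_lt_upper_bound; lia).
 rewrite dm_mod, dm_div by auto. rewrite Nat.mul_comm. symmetry. apply Nat.div_mod_eq. Qed.

Lemma Mid_rot D B i m : 0 < D -> 0 < B -> i < D * B -> m < D * B ->
  Mid i (rot D B m) = Mid m (rotinv D B i).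
Proof. intros. unfold Mid. destruct (Nat.eqb_spec i (rot D B m)); destruct (Nat.eqb_spec m (rotinv D B i)); auto.
 - exfalso. apply n. subst. rewrite rotinv_rot; auto.
 - exfalso. apply n. subst. rewrite rot_rotinv; auto. Qed.

Lemma Rmat_unitary D B : 0 < D -> 0 < B -> unitary (D * B) (Rmat D B).
Proof. intros HD HB i j Hi Hj. unfold Mmul, Madj, Rmat.
 transitivity (Csum (D * B) (fun m => Cmul (Mid m (rotinv D B i)) (Mid j (rot D B m)))).
 - apply Csum_ext; intros m Hm. rewrite Cconj_Mid, Mid_rot; auto.
 - rewrite Csum_delta by (apply rotinv_lt; auto). rewrite rot_rotinv by auto. apply Mid_sym. Qed.

Lemma Rmat_apply D B v i : 0 < D -> i < D * B -> Mapply (D * B) (Rmat D B) v i = v (rot D B i).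
Proof. intros. unfold Mapply, Rmat. apply Csum_delta. apply rot_lt; auto. Qed.

Lemma rot_prodvec D f fs i : 0 < D -> i < D * D ^ length fs ->
  prodvec D (f :: fs) (rot D (D ^ length fs) i) = prodvec D (fs ++ f :: nil) i.
Proof. intros HD Hi. pose proof (pow_pos D (length fs) HD).
 rewrite prodvec_app by (simpl; auto). simpl. unfold rot.
 assert (i mod D < D) by (apply Nat.mod_upper_bound; lia).
 assert (i / D < D ^ length fs) by (apply Nat.Div0.div_lt_upper_bound; lia).
 rewrite dm_div, dm_mod by auto. apply Cmul_comm. Qed.

Lemma kron_prodvec D A f fs i : 0 < D -> i < D * D ^ length fs ->
  Mapply (D * D ^ length fs) (kron (D ^ length fs) A Mid) (prodvec D (f :: fs)) i
  = prodvec D (Mapply D A f :: fs) i.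
Proof. intros HD Hi. apply Mapply_kron_prod. apply pow_pos; auto. intros. reflexivity. Qed.

Lemma prodvec_norm D fs : 0 < D -> (forall f, In f fs -> vnorm2 D f = 1%R) ->
  vnorm2 (D ^ length fs) (prodvec D fs) = 1%R.
Proof. intros HD. induction fs as [|f fs IH]; intros H.
 - unfold vnorm2; simpl. unfold Cmod2, C1; simpl. ring.
 - unfold vnorm2 in *. simpl length. change (D ^ S (length fs)) with (D * D ^ length fs).
   rewrite Rsum_split. pose proof (pow_pos D (length fs) HD).
   transitivity (Rsum D (fun a => Cmod2 (f a)) * Rsum (D ^ length fs) (fun b => Cmod2 (prodvec D fs b)))%R.
   + rewrite Rsum_mul_Rsum. apply Rsum_ext; intros. apply Rsum_ext; intros. simpl.
     rewrite dm_div, dm_mod, Cmod2_mul; auto.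
   + rewrite IH by (intros; apply H; simpl; auto). rewrite (H f) by (simpl; auto). ring. Qed.

End S_Dp.
Section S_E.
Local Open Scope nat_scope.

Definition Phi (N : nat) : Vec := fun d => if (d / N =? d mod N) then RtoC (/ sqrt (INR N)) else C0.
Definition Wm (n : nat) : Mat := fun x d =>
  Cmul (RtoC (/ sqrt (INR (2 ^ n)))) (Cconj (P n x (d / 2 ^ n) (d mod 2 ^ n))).
Definition Qm (n : nat) (U : Mat) : Mat := kron (2 ^ n) U Mid.
Definition phi (n : nat) (U : Mat) : Vec :=
  Mapply (2 ^ n * 2 ^ n) (Wm n) (Mapply (2 ^ n * 2 ^ n) (Qm n U) (Phi (2 ^ n))).

Fixpoint rep (D j : nat) : nat := match j with O => O | S j' => D ^ j' + rep D j' end.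

Definition alg (n k : nat) : algorithm :=
  let N := 2 ^ n in let D := N * N in let B := D ^ (k - 1) in
  mkAlg (B * N) k (prodvec D (repeat (Phi N) k))
    (fun t => match t with O => Mid | S _ => Mmul (D * B) (Rmat D B) (kron B (Wm n) Mid) end)
    (fun i => (i mod B =? (i / B) * rep D (k - 1))).

Lemma kron_assoc B N U i j : 0 < B -> 0 < N ->
  kron (B * N) U Mid i j = kron B (kron N U Mid) Mid i j.
Proof. intros. unfold kron. rewrite !Nat.Div0.div_div.
 rewrite <- (Mid_divmod B (i mod (B * N)) (j mod (B * N))) by auto.
 rewrite !mod_mul_div, !mod_mul_mod by auto. apply Cmul_assoc. Qed.

Lemma Mapply_mat_ext d A A' v i : (forall j, A i j = A' i j) -> Mapply d A v i = Mapply d A' v i.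
Proof. intros H. unfold Mapply. apply Csum_ext. intros. rewrite H; auto. Qed.

Lemma repeat_S_app {T} (x : T) t : repeat x t ++ x :: nil = repeat x (S t).
Proof. induction t; simpl; auto. rewrite IHt. auto. Qed.

Lemma reg_dim_alg n k : (1 <= k) -> reg_dim n (alg n k) = (2 ^ n * 2 ^ n) * (2 ^ n * 2 ^ n) ^ (k - 1).
Proof. intros. unfold reg_dim; simpl. ring. Qed.

Lemma state_alg n k U t i : 1 <= k -> t <= k -> i < (2 ^ n * 2 ^ n) ^ k ->
  state_after n (alg n k) U t i =
  prodvec (2 ^ n * 2 ^ n) (repeat (Phi (2 ^ n)) (k - t) ++ repeat (phi n U) t) i.
Proof. intros Hk. pose proof (pow_pos 2 n ltac:(lia)) as HN.
 set (N := 2 ^ n) in *. set (D := N * N).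
 assert (HD : 0 < D) by (unfold D; nia).
 set (B := D ^ (k - 1)). assert (HB : 0 < B) by (apply pow_pos; auto).
 assert (HDk : D ^ k = D * B) by (unfold B; destruct k; [lia|]; simpl; rewrite Nat.sub_0_r; auto).
 assert (Hreg : reg_dim n (alg n k) = D * B) by (rewrite reg_dim_alg; auto).
 revert i. induction t; intros i Ht Hi.
 - simpl state_after. rewrite Hreg. unfold Mapply. simpl ops.
   rewrite Csum_delta' by lia. rewrite Nat.sub_0_r, app_nil_r. auto.
 - cbn [state_after]. rewrite Hreg. simpl ops. fold N. fold D. fold B.
   set (fs := repeat (Phi N) (k - S t) ++ repeat (phi n U) t).
   assert (Hfs : length fs = k - 1) by (unfold fs; rewrite length_app, !repeat_length; lia).
   assert (HBfs : D ^ length fs = B) by (rewrite Hfs; auto).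
   assert (Hprev : forall j, j < D * B -> state_after n (alg n k) U t j = prodvec D (Phi N :: fs) j).
   { intros j Hj. rewrite IHt by lia. f_equal. unfold fs. replace (k - t) with (S (k - S t)) by lia. auto. }
   rewrite Mapply_Mmul. rewrite HDk in Hi.
   rewrite (Mapply_ext _ _ _ (fun j => prodvec D (Mapply D (Wm n) (Mapply D (Qm n U) (Phi N)) :: fs) j)).
   + rewrite Rmat_apply by auto. assert (Hi' : i < D * D ^ length fs) by (rewrite HBfs; auto). rewrite <- HBfs. rewrite rot_prodvec by (auto; exact Hi').
     unfold fs. rewrite <- app_assoc. fold N. unfold phi. fold N. fold D. rewrite repeat_S_app. auto.
   + intros j Hj.
     rewrite (Mapply_ext _ _ _ (fun j => prodvec D (Mapply D (Qm n U) (Phi N) :: fs) j)).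
     * rewrite <- HBfs. apply kron_prodvec; auto. rewrite HBfs; auto.
     * intros j' Hj'. simpl anc.
       rewrite (Mapply_mat_ext _ _ (kron B (Qm n U) Mid)) by (intros; apply kron_assoc; auto).
       rewrite (Mapply_ext _ _ _ (prodvec D (Phi N :: fs))) by (intros; apply Hprev; auto).
       rewrite <- HBfs. apply kron_prodvec; auto. rewrite HBfs; auto. Qed.

End S_E.
Section S_F.

Lemma Rsum_delta n m g : (m < n)%nat -> Rsum n (fun i => if (i =? m)%nat then g i else 0) = g m.
Proof. induction n; intros H; simpl. lia. destruct (Nat.eqb_spec n m).
 - subst. rewrite (Rsum_ext _ _ (fun _ => 0)). rewrite Rsum_const0; ring.
   intros i Hi. destruct (Nat.eqb_spec i m); [lia|auto].
 - rewrite IHn by lia. ring. Qed.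

Lemma rep_prop D j : (0 < D)%nat -> ((D - 1) * rep D j + 1 = D ^ j)%nat.
Proof. intros HD. induction j as [|j IHj]; simpl rep; [simpl; lia|]. change (D ^ S j)%nat with (D * D ^ j)%nat.
 destruct D; [lia|]. rewrite Nat.sub_succ, Nat.sub_0_r in *. nia. Qed.

Lemma rep_lt D j a : (a < D)%nat -> (a * rep D j < D ^ j)%nat.
Proof. intros. pose proof (rep_prop D j ltac:(lia)). nia. Qed.

Lemma prodvec_rep D f j a : (a < D)%nat -> prodvec D (repeat f j) (a * rep D j)%nat = Cpow (f a) j.
Proof. intros Ha. induction j; simpl; auto. rewrite repeat_length.
 replace (a * (D ^ j + rep D j))%nat with (a * D ^ j + a * rep D j)%nat by ring.
 rewrite dm_div, dm_mod by (apply rep_lt; auto). rewrite IHj. auto. Qed.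

Lemma Cmod2_pow z j : Cmod2 (Cpow z j) = Cmod2 z ^ j.
Proof. induction j; simpl. unfold Cmod2, C1; simpl; ring. rewrite Cmod2_mul, IHj. auto. Qed.

Lemma accept_alg n k U : (1 <= k)%nat ->
  accept_prob n (alg n k) U = Rsum (2 ^ n * 2 ^ n) (fun x => Cmod2 (phi n U x) ^ k).
Proof. intros Hk. pose proof (pow_pos 2 n ltac:(lia)) as HN.
 set (N := (2 ^ n)%nat) in *. set (D := (N * N)%nat).
 assert (HD : (0 < D)%nat) by (unfold D; nia).
 set (B := (D ^ (k - 1))%nat). assert (HB : (0 < B)%nat) by (apply pow_pos; auto).
 unfold accept_prob. rewrite reg_dim_alg by auto. fold N. fold D. fold B.
 rewrite Rsum_split. apply Rsum_ext. intros a Ha.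
 rewrite (Rsum_ext _ _ (fun b => if (b =? a * rep D (k - 1))%nat then Cmod2 (phi n U a) * Cmod2 (prodvec D (repeat (phi n U) (k - 1)) b) else 0)).
 - rewrite Rsum_delta by (apply rep_lt; auto). rewrite prodvec_rep by auto. rewrite Cmod2_pow.
   replace k with (S (k - 1)) at 2 by lia. simpl. ring.
 - intros b Hb. simpl acc. fold N. fold D. fold B. rewrite dm_mod, dm_div by auto.
   destruct (b =? a * rep D (k - 1))%nat; auto.
   simpl queries. rewrite state_alg by (auto; unfold D, N in *; replace k with (S (k - 1)) by lia; simpl; nia).
   rewrite Nat.sub_diag. simpl app. replace k with (S (k - 1)) at 1 by lia. simpl prodvec.
   rewrite repeat_length. fold B. rewrite dm_mod, dm_div by auto. apply Cmod2_mul. Qed.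

End S_F.
Section S_G.

Definition ip (N : nat) (A B : Mat) : C := Csum N (fun i => Csum N (fun j => Cmul (Cconj (A i j)) (B i j))).

Lemma INR_pos N : (0 < N)%nat -> 0 < INR N.
Proof. intros. apply lt_0_INR. auto. Qed.

Lemma inv_sqrt_sq N : (0 < N)%nat -> / sqrt (INR N) * / sqrt (INR N) = / INR N.
Proof. intros H. pose proof (INR_pos N H). rewrite <- Rinv_mult. rewrite sqrt_sqrt; lra. Qed.

Lemma QPhi n U d : (d < 2 ^ n * 2 ^ n)%nat ->
  Mapply (2 ^ n * 2 ^ n) (Qm n U) (Phi (2 ^ n)) d = Cmul (U (d / 2 ^ n)%nat (d mod 2 ^ n)%nat) (RtoC (/ sqrt (INR (2 ^ n)))).
Proof. intros Hd. pose proof (pow_pos 2 n ltac:(lia)) as HN. set (N := (2 ^ n)%nat) in *.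
 unfold Mapply, Qm. fold N. rewrite Csum_split.
 transitivity (Csum N (fun a => Cmul (Mid a (d mod N)%nat) (Cmul (U (d / N)%nat a) (RtoC (/ sqrt (INR N)))))).
 - apply Csum_ext; intros a Ha.
   transitivity (Csum N (fun b => Cmul (Mid (d mod N)%nat b) (Cmul (U (d / N)%nat a) (Phi N (a * N + b)%nat)))).
   + apply Csum_ext; intros b Hb. unfold kron. rewrite dm_div, dm_mod by auto. cring.
   + rewrite Csum_delta' by (apply Nat.mod_upper_bound; lia). unfold Phi. rewrite dm_div, dm_mod by (apply Nat.mod_upper_bound; lia).
     unfold Mid. destruct (a =? d mod N)%nat; cring.
 - rewrite Csum_delta by (apply Nat.mod_upper_bound; lia). auto. Qed.

Lemma phi_formula n U x : phi n U x = Cmul (RtoC (/ INR (2 ^ n))) (ip (2 ^ n) (P n x) U).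
Proof. pose proof (pow_pos 2 n ltac:(lia)) as HN. unfold phi.
 unfold Mapply at 1. rewrite (Csum_ext _ _ (fun d => Cmul (RtoC (/ INR (2 ^ n)))
    (Cmul (Cconj (P n x (d / 2 ^ n)%nat (d mod 2 ^ n)%nat)) (U (d / 2 ^ n)%nat (d mod 2 ^ n)%nat)))).
 - rewrite Csum_scal. f_equal. unfold ip. rewrite Csum_split. apply Csum_ext; intros i Hi. apply Csum_ext; intros j Hj.
   rewrite dm_div, dm_mod; auto.
 - intros d Hd. rewrite QPhi by auto. unfold Wm. rewrite <- (inv_sqrt_sq (2 ^ n)) by auto. unfold RtoC. cring. Qed.

Lemma Wm_unitary n : unitary (2 ^ n * 2 ^ n) (Wm n).
Proof. pose proof (pow_pos 2 n ltac:(lia)) as HN. intros d e Hd He. unfold Mmul, Madj, Wm.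
 assert (H4 : (2 ^ n * 2 ^ n = 4 ^ n)%nat) by (rewrite <- Nat.pow_mul_l; auto).
 rewrite H4.
 rewrite (Csum_ext _ _ (fun x => Cmul (RtoC (/ INR (2 ^ n)))
   (Cmul (Cconj (P n x (e / 2 ^ n)%nat (e mod 2 ^ n)%nat)) (P n x (d / 2 ^ n)%nat (d mod 2 ^ n)%nat)))).
 - rewrite Csum_scal. rewrite pauli_complete by (try apply Nat.mod_upper_bound; try lia; apply Nat.Div0.div_lt_upper_bound; lia).
     rewrite Mid_sym, (Mid_sym (e mod 2 ^ n)%nat), (Mid_divmod _ d e) by auto.
     pose proof (INR_pos _ HN). unfold RtoC. rewrite Cmul_assoc.
     replace (Cmul (/ INR (2 ^ n), 0) (INR (2 ^ n), 0)) with C1 by (unfold Cmul, C1; simpl; f_equal; field; lra).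
     apply Cmul_1_l.
 - intros x Hx. rewrite Cconj_mul, Cconj_involutive. rewrite <- (inv_sqrt_sq (2 ^ n)) by auto. unfold RtoC. cring. Qed.

Lemma Rsum_const n c : Rsum n (fun _ => c) = INR n * c.
Proof. induction n; simpl. ring. rewrite IHn. destruct n; simpl; ring. Qed.

Lemma Phi_norm N : (0 < N)%nat -> vnorm2 (N * N) (Phi N) = 1.
Proof. intros HN. unfold vnorm2. rewrite Rsum_split.
 rewrite (Rsum_ext _ _ (fun _ => / INR N)).
 - rewrite Rsum_const. pose proof (INR_pos N HN). field. lra.
 - intros a Ha. rewrite (Rsum_ext _ _ (fun b => if (b =? a)%nat then / INR N else 0)).
   + rewrite (Rsum_delta N a (fun _ => / INR N)); auto.
   + intros b Hb. unfold Phi. rewrite dm_div, dm_mod by auto. rewrite Nat.eqb_sym.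
     destruct (b =? a)%nat; unfold Cmod2, RtoC, C0; simpl.
     rewrite Rmult_0_r, Rplus_0_r. apply inv_sqrt_sq; auto. ring. Qed.

Lemma parseval n U : unitary (2 ^ n) U -> Rsum (2 ^ n * 2 ^ n) (fun x => Cmod2 (phi n U x)) = 1.
Proof. intros HU. pose proof (pow_pos 2 n ltac:(lia)) as HN.
 change (vnorm2 (2 ^ n * 2 ^ n) (phi n U) = 1). unfold phi.
 rewrite norm_preserve by apply Wm_unitary. rewrite norm_preserve.
 apply Phi_norm; auto. apply unitary_kron; auto. Qed.

Lemma Mid_unitary d : unitary d Mid.
Proof. intros i j Hi Hj. unfold Mmul, Madj.
 rewrite (Csum_ext _ _ (fun m => Cmul (Mid m i) (Mid m j))) by (intros; rewrite Cconj_Mid; auto).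
 rewrite Csum_delta; auto. Qed.

Lemma wf_alg n k : (1 <= k)%nat -> well_formed n (alg n k).
Proof. intros Hk. pose proof (pow_pos 2 n ltac:(lia)) as HN.
 assert (HD : (0 < 2 ^ n * 2 ^ n)%nat) by nia.
 assert (HB : (0 < (2 ^ n * 2 ^ n) ^ (k - 1))%nat) by (apply pow_pos; auto).
 split; [|split].
 - simpl. nia.
 - rewrite reg_dim_alg by auto. simpl psi0.
   replace ((2 ^ n * 2 ^ n) * (2 ^ n * 2 ^ n) ^ (k - 1))%nat with ((2 ^ n * 2 ^ n) ^ length (repeat (Phi (2 ^ n)) k))%nat.
   + apply prodvec_norm; auto. intros f Hf. apply repeat_spec in Hf. subst. apply Phi_norm; auto.
   + rewrite repeat_length. replace k with (S (k - 1)) at 1 by lia. auto.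
 - intros t Ht. rewrite reg_dim_alg by auto. destruct t; simpl ops.
   + apply Mid_unitary.
   + apply unitary_Mmul. apply Rmat_unitary; auto. apply unitary_kron; auto. apply Wm_unitary.
Qed.

End S_G.
Section S_H.

Lemma Rsum_add n f g : Rsum n (fun i => f i + g i) = Rsum n f + Rsum n g.
Proof. induction n; simpl. ring. rewrite IHn. ring. Qed.

Lemma Csum_real n g : Csum n (fun i => (g i, 0)) = (Rsum n g, 0).
Proof. induction n; simpl. auto. rewrite IHn. unfold Cadd; simpl. f_equal; ring. Qed.

Lemma conj_self z : Cmul (Cconj z) z = (Cmod2 z, 0).
Proof. destruct z. unfold Cmul, Cconj, Cmod2; simpl. f_equal; ring. Qed.

Lemma ip_self N A : ip N A A = (Rsum N (fun i => Rsum N (fun j => Cmod2 (A i j))), 0).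
Proof. unfold ip. rewrite <- Csum_real. apply Csum_ext; intros. 
 rewrite (Csum_ext _ _ (fun j => (Cmod2 (A i j), 0))) by (intros; apply conj_self). apply Csum_real. Qed.

Lemma unitary_frob N U : unitary N U -> Rsum N (fun i => Rsum N (fun j => Cmod2 (U i j))) = INR N.
Proof. intros HU.
 assert (H : ip N U U = (INR N, 0)).
 { unfold ip. rewrite Csum_swap. rewrite (Csum_ext _ _ (fun j => (1, 0))).
   - rewrite Csum_real, Rsum_const. f_equal; ring.
   - intros j Hj. rewrite unit_col by auto. unfold Mid. rewrite Nat.eqb_refl. auto. }
 rewrite ip_self in H. injection H; auto. Qed.

Lemma Cmod2_Cexpi t : Cmod2 (Cexpi t) = 1.
Proof. unfold Cmod2, Cexpi; simpl. rewrite Rplus_comm. rewrite <- !Rsqr_pow2 || idtac.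
 pose proof (sin2_cos2 t). unfold Rsqr in H. lra. Qed.

Lemma Cmod2_Cpow_Ci k : Cmod2 (Cpow Ci k) = 1.
Proof. rewrite Cmod2_pow. unfold Cmod2, Ci; simpl. rewrite Rmult_0_l, Rmult_1_l, Rplus_0_l. apply pow1. Qed.

Lemma expand_pt c u v : Cmod2 (Csub (Cmul c u) v) = Cmod2 c * Cmod2 u + Cmod2 v - 2 * fst (Cmul c (Cmul (Cconj v) u)).
Proof. destruct c, u, v. unfold Cmod2, Csub, Cadd, Copp, Cmul, Cconj; simpl. ring. Qed.

Lemma dist_expand N c U V : Cmod2 c = 1 ->
  Rsum N (fun i => Rsum N (fun j => Cmod2 (Msub (Mscale c U) V i j))) =
  Rsum N (fun i => Rsum N (fun j => Cmod2 (U i j))) + Rsum N (fun i => Rsum N (fun j => Cmod2 (V i j)))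
  - 2 * fst (Cmul c (ip N V U)).
Proof. intros Hc. unfold Msub, Mscale.
 rewrite (Rsum_ext _ _ (fun i => Rsum N (fun j => Cmod2 (U i j)) + Rsum N (fun j => Cmod2 (V i j)) + (-2) * Rsum N (fun j => fst (Cmul c (Cmul (Cconj (V i j)) (U i j)))))).
 - rewrite !Rsum_add, Rsum_scal. unfold ip. rewrite <- Csum_scal. rewrite <- Rsum_fst.
   rewrite (Rsum_ext N (fun i => Rsum N (fun j => fst (Cmul c (Cmul (Cconj (V i j)) (U i j))))) (fun i => fst (Cmul c (Csum N (fun j => Cmul (Cconj (V i j)) (U i j)))))).
   ring. intros. rewrite <- Csum_scal, <- Rsum_fst. auto.
 - intros i Hi. rewrite <- !Rsum_scal, <- !Rsum_add. apply Rsum_ext. intros. rewrite expand_pt, Hc. ring. Qed.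

Lemma angle z : exists t, fst (Cmul (Cexpi t) z) = sqrt (Cmod2 z).
Proof. destruct z as [a b]. unfold Cmul, Cexpi, Cmod2; simpl.
 set (r := sqrt (a * a + b * b)).
 assert (Hr0 : 0 <= r) by apply sqrt_pos.
 assert (Hrr : r * r = a * a + b * b) by (apply sqrt_sqrt; nra).
 destruct (Req_dec r 0) as [H0|H0].
 - exists 0. assert (a = 0) by nra. assert (b = 0) by nra. subst. rewrite H0. ring.
 - assert (Hc : -1 <= a / r <= 1).
   { assert (a * a <= r * r) by nra. split.
     - apply (Rmult_le_reg_r r); [lra|]. field_simplify; [|lra]. nra.
     - apply (Rmult_le_reg_r r); [lra|]. field_simplify; [|lra]. nra. }
   assert (Hs : sqrt (1 - (a / r)²) = Rabs b / r).
   { replace (1 - (a / r)²) with ((Rabs b / r)²).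
     - apply sqrt_Rsqr. unfold Rdiv; apply Rmult_le_pos; [apply Rabs_pos| left; apply Rinv_0_lt_compat; lra].
     - unfold Rsqr. assert (Hbb : Rabs b * Rabs b = b * b) by (rewrite <- Rabs_mult; apply Rabs_right; nra).
       transitivity ((Rabs b * Rabs b) / (r * r)). field; lra.
       rewrite Hbb. transitivity ((r * r - a * a) / (r * r)). rewrite Hrr. f_equal; ring. field; lra. }
   destruct (Rle_dec b 0).
   + exists (acos (a / r)). rewrite cos_acos, sin_acos, Hs by auto. rewrite Rabs_left1 by auto.
     apply (Rmult_eq_reg_r r); [|lra]. field_simplify; [|lra]. nra.
   + exists (- acos (a / r)). rewrite cos_neg, sin_neg, cos_acos, sin_acos, Hs by auto. rewrite Rabs_right by lra.
     apply (Rmult_eq_reg_r r); [|lra]. field_simplify; [|lra]. nra. Qed.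

Lemma P_in_group n x : (x < 4 ^ n)%nat -> in_pauli_group n (P n x).
Proof. intros Hx. exists 0%nat, (digits n x). split; [lia|]. split. apply digits_z4; auto.
 intros i j _ _. unfold Mscale. simpl. rewrite Cmul_1_l. auto. Qed.

Lemma frob_sq d M : frob d M * frob d M = Rsum d (fun i => Rsum d (fun j => Cmod2 (M i j))).
Proof. unfold frob. apply sqrt_sqrt. apply Rsum_nonneg; intros; apply Rsum_nonneg; intros; apply Cmod2_ge0. Qed.

Lemma far_bound n eps U x : unitary (2 ^ n) U -> 0 < eps -> eps_far_pauli n eps U -> (x < 4 ^ n)%nat ->
  sqrt (Cmod2 (ip (2 ^ n) (P n x) U)) <= INR (2 ^ n) * (1 - eps ^ 2).
Proof. intros HU He Hfar Hx. pose proof (pow_pos 2 n ltac:(lia)) as HN. pose proof (INR_pos _ HN) as HNr.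
 set (N := (2 ^ n)%nat) in *.
 destruct (angle (ip N (P n x) U)) as [t Ht].
 specialize (Hfar (P n x) (P_in_group n x Hx) t).
 set (F := frob N (Msub (Mscale (Cexpi t) U) (P n x))) in Hfar.
 assert (HF : F * F = 2 * INR N - 2 * sqrt (Cmod2 (ip N (P n x) U))).
 { unfold F. rewrite frob_sq, dist_expand by apply Cmod2_Cexpi. rewrite unitary_frob by auto.
   unfold N. rewrite P_frob. fold N. rewrite Ht. ring. }
 assert (HF0 : 0 <= F) by (unfold F, frob; apply sqrt_pos).
 assert (Hs2 : 0 < sqrt (2 * INR N)) by (apply sqrt_lt_R0; lra).
 assert (Hss : sqrt (2 * INR N) * sqrt (2 * INR N) = 2 * INR N) by (apply sqrt_sqrt; lra).
 assert (H1 : eps * sqrt (2 * INR N) <= F).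
 { change (eps <= / sqrt (2 * INR N) * F) in Hfar.
   apply (Rmult_le_compat_r (sqrt (2 * INR N))) in Hfar; [|lra].
   replace (/ sqrt (2 * INR N) * F * sqrt (2 * INR N)) with F in Hfar by (field; lra). auto. }
 assert (H2 : eps * sqrt (2 * INR N) * (eps * sqrt (2 * INR N)) <= F * F).
 { apply Rmult_le_compat; try nra. }
 assert (Heq : eps * sqrt (2 * INR N) * (eps * sqrt (2 * INR N)) = eps * eps * (2 * INR N))
   by (transitivity (eps * eps * (sqrt (2 * INR N) * sqrt (2 * INR N))); [ring | rewrite Hss; ring]).
 rewrite Heq in H2.
 nra. Qed.

Lemma pauli_p1 n U : has_pauli_property n U ->
  exists y, (y < 4 ^ n)%nat /\ Cmod2 (ip (2 ^ n) (P n y) U) = INR (2 ^ n) ^ 2.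
Proof. intros [t [V [[k [l [Hk [[Hl Hl4] HV]]]] HU]]].
 exists (idx l). split. rewrite <- Hl. apply idx_lt; auto.
 assert (HP : P n (idx l) = pauli_tensor l) by (unfold P; rewrite <- Hl, digits_idx; auto).
 rewrite HP.
 set (c := Cmul (Cexpi t) (Cpow Ci k)).
 assert (Hip : ip (2 ^ n) (pauli_tensor l) U = Cmul c (ip (2 ^ n) (pauli_tensor l) (pauli_tensor l))).
 { unfold ip. rewrite <- Csum_scal. apply Csum_ext; intros i Hi. rewrite <- Csum_scal. apply Csum_ext; intros j Hj.
   rewrite HU by auto. unfold Mscale. rewrite HV by auto. unfold Mscale, c. cring. }
 rewrite Hip, ip_self, <- HP, P_frob, Cmod2_mul. unfold c. rewrite Cmod2_mul, Cmod2_Cexpi, Cmod2_Cpow_Ci.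
 unfold Cmod2; simpl. ring. Qed.

End S_H.
Section S_I.

Lemma p_formula n U x : Cmod2 (phi n U x) = Cmod2 (ip (2 ^ n) (P n x) U) / (INR (2 ^ n) ^ 2).
Proof. pose proof (INR_pos _ (pow_pos 2 n ltac:(lia))). rewrite phi_formula, Cmod2_mul.
 unfold Cmod2 at 1, RtoC; simpl. field. lra. Qed.

Lemma D4 n : (2 ^ n * 2 ^ n = 4 ^ n)%nat.
Proof. rewrite <- Nat.pow_mul_l; auto. Qed.

Lemma bern e j : 0 <= e <= 1 -> (1 - e) ^ j * (1 + INR j * e) <= 1.
Proof. intros He. induction j. simpl. lra.
 rewrite S_INR. simpl.
 assert (0 <= (1 - e) ^ j) by (apply pow_le; lra).
 assert (0 <= INR j) by apply pos_INR.
 assert ((1 - e) * (1 + (INR j + 1) * e) <= 1 + INR j * e) by nra. nra. Qed.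

Lemma p_far n eps U x : unitary (2 ^ n) U -> 0 < eps -> eps < 1 -> eps_far_pauli n eps U -> (x < 2 ^ n * 2 ^ n)%nat ->
  Cmod2 (phi n U x) <= (1 - eps ^ 2) ^ 2.
Proof. intros HU He He1 Hf Hx. rewrite D4 in Hx. pose proof (far_bound n eps U x HU He Hf Hx) as Hb.
 pose proof (INR_pos _ (pow_pos 2 n ltac:(lia))) as HN.
 rewrite p_formula. set (c := Cmod2 (ip (2 ^ n) (P n x) U)) in *.
 assert (Hc : 0 <= c) by apply Cmod2_ge0.
 assert (Hs : sqrt c * sqrt c = c) by (apply sqrt_sqrt; auto).
 assert (0 <= sqrt c) by apply sqrt_pos.
 assert (0 <= 1 - eps ^ 2) by nra.
 apply (Rmult_le_reg_r (INR (2 ^ n) ^ 2)). nra.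
 replace (c / INR (2 ^ n) ^ 2 * INR (2 ^ n) ^ 2) with c by (field; lra).
 rewrite <- Hs. replace ((1 - eps ^ 2) ^ 2 * INR (2 ^ n) ^ 2) with ((INR (2 ^ n) * (1 - eps ^ 2)) * (INR (2 ^ n) * (1 - eps ^ 2))) by ring.
 apply Rmult_le_compat; auto. Qed.

Lemma far_empty n eps U : unitary (2 ^ n) U -> 1 <= eps -> eps_far_pauli n eps U -> False.
Proof. intros HU He Hf. pose proof (parseval n U HU) as Hp.
 rewrite (Rsum_ext _ _ (fun _ => 0)) in Hp. rewrite Rsum_const0 in Hp. lra.
 intros x Hx. rewrite D4 in Hx. pose proof (far_bound n eps U x HU ltac:(lra) Hf Hx) as Hb.
 pose proof (INR_pos _ (pow_pos 2 n ltac:(lia))) as HN.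
 assert (0 <= sqrt (Cmod2 (ip (2 ^ n) (P n x) U))) by apply sqrt_pos.
 assert (1 <= eps ^ 2) by (simpl; nra).
 assert (INR (2 ^ n) * (1 - eps ^ 2) <= 0) by (assert (0 <= INR (2 ^ n) * (eps ^ 2 - 1)) by (apply Rmult_le_pos; lra); lra).
 assert (Hz : sqrt (Cmod2 (ip (2 ^ n) (P n x) U)) = 0) by lra.
 apply sqrt_eq_0 in Hz; [|apply Cmod2_ge0]. rewrite p_formula, Hz. field. nra. Qed.

Definition triv : algorithm := mkAlg 1 0 (fun i => Mid i 0%nat) (fun _ => Mid) (fun _ => true).

Lemma triv_ok n U : accept_prob n triv U = 1 /\ well_formed n triv.
Proof. pose proof (pow_pos 2 n ltac:(lia)) as HN.
 assert (Hn : Rsum (reg_dim n triv) (fun i => Cmod2 (Mid i 0%nat)) = 1).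
 { rewrite (Rsum_ext _ _ (fun i => if (i =? 0)%nat then 1 else 0)).
   apply (Rsum_delta _ 0%nat (fun _ => 1)). unfold reg_dim; simpl; lia.
   intros i _. unfold Mid. destruct (i =? 0)%nat; unfold Cmod2, C1, C0; simpl; ring. }
 split.
 - unfold accept_prob. simpl. rewrite <- Hn. apply Rsum_ext. intros i Hi.
   unfold Mapply. rewrite Csum_delta'; auto.
 - split; [simpl; lia|split]. apply Hn. intros. apply Mid_unitary. Qed.

Theorem lemma3 :
  exists K : R, 0 < K /\
    forall (n : nat) (eps : R), (1 <= n)%nat -> 0 < eps ->
      exists a : algorithm,
        well_formed n a /\
        INR (queries a) <= K / (eps ^ 2) /\
        eps_tests_pauli n eps a.
Proof.
 exists 3. split; [lra|]. intros n eps Hn He.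
 assert (He2 : 0 < eps ^ 2) by (apply pow_lt; auto).
 destruct (Rle_dec 1 eps) as [Hbig|Hsmall].
 - exists triv. destruct (triv_ok n (fun _ _ => C0)) as [_ Hwf]. split; auto. split.
   + simpl. unfold Rdiv. apply Rmult_le_pos; [lra| left; apply Rinv_0_lt_compat; auto].
   + intros U HU. destruct (triv_ok n U) as [Ha _]. rewrite Ha. split; intros; [lra|].
     exfalso. eapply far_empty; eauto.
 - assert (Heps1 : eps < 1) by lra. set (e := eps ^ 2) in *.
   assert (He1 : e < 1) by (unfold e; nra).
   set (z := up (/ e)). destruct (archimed (/ e)) as [Hz1 Hz2]. fold z in Hz1, Hz2.
   assert (Hie : 1 < / e) by (rewrite <- Rinv_1; apply Rinv_lt_contravar; lra).
   assert (Hz0 : (0 <= z)%Z) by (apply le_IZR; lra).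
   set (m := Z.to_nat z).
   assert (Hm : INR m = IZR z) by (unfold m; rewrite INR_IZR_INZ, Z2Nat.id; auto).
   exists (alg n (S m)). split; [apply wf_alg; lia|]. split.
   + simpl queries. rewrite S_INR, Hm. unfold Rdiv. rewrite Rmult_comm.
     replace (/ e * 3) with (/ e + 2 * / e) by ring. lra.
   + intros U HU. rewrite accept_alg by lia. split.
     * intros Hp. destruct (pauli_p1 n U Hp) as [y [Hy Hy1]]. rewrite <- D4 in Hy.
       eapply Rle_trans; [|apply (Rsum_ge_term _ _ y Hy)].
       cbv beta. rewrite p_formula, Hy1. unfold Rdiv. rewrite Rinv_r. rewrite pow1. lra.
       pose proof (INR_pos _ (pow_pos 2 n ltac:(lia))). apply pow_nonzero. lra.
       intros; apply pow_le; apply Cmod2_ge0.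
     * intros Hf. set (b := (1 - e) ^ 2).
       assert (Hpb : forall x, (x < 2 ^ n * 2 ^ n)%nat -> Cmod2 (phi n U x) <= b) by (intros; apply p_far; auto).
       assert (Hb0 : 0 <= b) by (unfold b; apply pow2_ge_0).
       eapply Rle_trans. apply (Rsum_le _ _ (fun x => b ^ m * Cmod2 (phi n U x))).
       { intros x Hx. simpl. rewrite Rmult_comm. apply Rmult_le_compat_r. apply Cmod2_ge0.
         apply pow_incr. split. apply Cmod2_ge0. auto. }
       rewrite Rsum_scal, parseval by auto. rewrite Rmult_1_r.
       unfold b. rewrite <- pow_mult.
       pose proof (bern e (2 * m) ltac:(unfold e in *; nra)) as Hbe.
       rewrite mult_INR, Hm in Hbe. simpl (INR 2) in Hbe.
       assert (Hpos : 0 <= (1 - e) ^ (2 * m)) by (apply pow_le; lra).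
       assert (Hze : 1 <= IZR z * e).
       { apply (Rmult_le_reg_r (/ e)). apply Rinv_0_lt_compat; auto.
         replace (IZR z * e * / e) with (IZR z) by (field; lra). lra. }
       nra.
Qed.

End S_I.
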